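(* Fix $q\ge2$ and $z\in\mathbb Z$, and let $\Delta_n=\log_q n-\lceil\log_q n\rceil$. Then $$\lim_{n\to\infty}\frac{|\mathcal C_1(n,q,\lceil\log_q n\rceil+z)|}{\frac{q^n}{n}\big(\frac{q-1}{q}\big)^2 q^{\,\Delta_n-z-(\log_q e)(q-1)q^{\Delta_n-z-1}}}=1.$$
   Context: $\Sigma_q=\{0,\dots,q-1\}$. For integers $1\le k<n$, $\mathcal C_1(n,q,k)$ is the set of $\vec a\in\Sigma_q^n$ such that $a_1=\dots=a_k=0$, $a_{k+1}\ne0$, $a_n\ne0$, and $(a_{k+2},\dots,a_{n-1})$ contains no run of $k$ consecutive zeros. *)

(* Defs.v *)
From Stdlib Require Import Reals Lia ZArith Arith List.
Import ListNotations.
Open Scope R_scope.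

Fixpoint all_words (q n : nat) : list (list nat) :=
  match n with
  | O => [ [] ]
  | S m => flat_map (fun w => map (fun a => a :: w) (seq 0 q)) (all_words q m)
  end.

(* l contains a run of k consecutive zeros (positions i, ..., i+k-1, all
   inside l).  Out-of-range positions read as the nonzero default 1. *)
Definition has_zero_run (k : nat) (l : list nat) : bool :=
  existsb (fun i => forallb (fun j => Nat.eqb (nth (i + j) l 1%nat) 0) (seq 0 k))
          (seq 0 (S (length l))).

(* Membership in C_1(n,q,k) for a word a of length n (0-based positions):
   a_1..a_k = 0, a_{k+1} <> 0, a_n <> 0, and (a_{k+2},...,a_{n-1}) has no
   run of k consecutive zeros. *)
Definition inC1 (n k : nat) (a : list nat) : bool :=
  forallb (fun i => Nat.eqb (nth i a 0%nat) 0) (seq 0 k)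
  && negb (Nat.eqb (nth k a 0%nat) 0)
  && negb (Nat.eqb (nth (n - 1) a 0%nat) 0)
  && negb (has_zero_run k (firstn (n - k - 2) (skipn (k + 1) a))).

Definition card_C1 (n q k : nat) : nat :=
  length (filter (inC1 n k) (all_words q n)).

Definition logq (q x : R) : R := ln x / ln q.

(* ceiling: floor x = up x - 1, so ceil x = - floor (- x) = 1 - up (- x) *)
Definition Rceil (x : R) : Z := (1 - up (- x))%Z.

Definition Delta (q n : nat) : R := logq (INR q) (INR n) - IZR (Rceil (logq (INR q) (INR n))).

(* k_n = ceil(log_q n) + z, as a natural number (positive for large n) *)
Definition kn (q n : nat) (z : Z) : nat := Z.to_nat (Rceil (logq (INR q) (INR n)) + z).

Definition main_term (q n : nat) (z : Z) : R :=
  let Q := INR q in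
  let D := Delta q n in
  (Q ^ n / INR n) * ((Q - 1) / Q) ^ 2 *
  Rpower Q (D - IZR z - (logq Q (exp 1)) * (Q - 1) * Rpower Q (D - IZR z - 1)).

(* Main.v *)
Require Import Defs.
From Stdlib Require Import Reals ZArith Lia Lra Psatz List Arith Bool.
Import ListNotations.
Open Scope R_scope.

Definition cnt (q n : nat) (P : list nat -> bool) : nat := length (filter P (all_words q n)).

Lemma all_words_len q n w : In w (all_words q n) -> length w = n.
Proof.
  revert w; induction n; simpl; intros w H.
  - destruct H as [<-|[]]; reflexivity.
  - apply in_flat_map in H as [w' [Hw' Hin]]. apply in_map_iff in Hin as [a [<- _]].
    simpl. f_equal. auto.
Qed.

Lemma len_filter_flat_map {A B : Type} (P : B -> bool) (g : A -> list B) L :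
  length (filter P (flat_map g L)) = list_sum (map (fun x => length (filter P (g x))) L).
Proof. induction L; simpl; [reflexivity|]. rewrite filter_app, length_app, IHL. reflexivity. Qed.

Lemma len_filter_sum {A : Type} (P : A -> bool) L :
  length (filter P L) = list_sum (map (fun w => if P w then 1%nat else 0%nat) L).
Proof. induction L; simpl; [reflexivity|]. destruct (P a); simpl; lia. Qed.

Lemma sum_plus {A : Type} (f g : A -> nat) L :
  list_sum (map (fun a => (f a + g a)%nat) L) = (list_sum (map f L) + list_sum (map g L))%nat.
Proof. induction L; simpl; lia. Qed.

Lemma sum_const {A : Type} (c : nat) (L : list A) :
  list_sum (map (fun _ => c) L) = (length L * c)%nat.
Proof. induction L; simpl; lia. Qed.

Lemma sum_swap {A B : Type} (h : A -> B -> nat) (As : list A) (L : list B) :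
  list_sum (map (fun w => list_sum (map (fun a => h a w) As)) L) =
  list_sum (map (fun a => list_sum (map (fun w => h a w) L)) As).
Proof.
  induction L; simpl.
  - rewrite sum_const. lia.
  - rewrite sum_plus, IHL. reflexivity.
Qed.

Lemma cnt_S q n P : cnt q (S n) P = list_sum (map (fun a => cnt q n (fun w => P (a :: w))) (seq 0 q)).
Proof.
  unfold cnt; simpl. rewrite len_filter_flat_map.
  rewrite (map_ext _ (fun w => list_sum (map (fun a => if P (a::w) then 1%nat else 0%nat) (seq 0 q)))).
  2:{ intro w. rewrite len_filter_sum, map_map. reflexivity. }
  rewrite (sum_swap (fun a w => if P (a :: w) then 1%nat else 0%nat)).
  apply f_equal, map_ext; intro a. rewrite len_filter_sum. reflexivity.
Qed.

Lemma cnt_ext_in q n P P' : (forall w, length w = n -> P w = P' w) -> cnt q n P = cnt q n P'.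
Proof.
  intro H. unfold cnt. f_equal. apply filter_ext_in. intros w Hw. apply H. eapply all_words_len; eauto.
Qed.

Lemma cnt_ext q n P P' : (forall w, P w = P' w) -> cnt q n P = cnt q n P'.
Proof. intro H; apply cnt_ext_in; auto. Qed.

Lemma cnt_false q n : cnt q n (fun _ => false) = 0%nat.
Proof. unfold cnt. induction (all_words q n); simpl; auto. Qed.

Lemma cnt_0 q P : cnt q 0 P = if P [] then 1%nat else 0%nat.
Proof. unfold cnt; simpl. destruct (P []); reflexivity. Qed.

Lemma sum_seq_split q X Y (f : nat -> nat) : (1 <= q)%nat -> f 0%nat = X ->
  (forall a, (1 <= a)%nat -> f a = Y) -> list_sum (map f (seq 0 q)) = (X + (q-1)*Y)%nat.
Proof.
  intros Hq H0 H1. destruct q; [lia|]. simpl. rewrite H0.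
  rewrite (map_ext_in _ (fun _ => Y)). 2:{ intros a Ha. apply in_seq in Ha. apply H1; lia. }
  rewrite sum_const, length_seq. lia.
Qed.

Fixpoint noRun (k c : nat) (l : list nat) : bool :=
  match l with
  | [] => Nat.ltb c k
  | a :: l' => Nat.ltb c k && noRun k (if Nat.eqb a 0 then S c else 0%nat) l'
  end.

Lemma hzr_char k l : has_zero_run k l = true <->
  exists i, (i <= length l)%nat /\ forall j, (j < k)%nat -> nth (i+j) l 1%nat = 0%nat.
Proof.
  unfold has_zero_run. rewrite existsb_exists. split.
  - intros [i [Hi Hf]]. apply in_seq in Hi. rewrite forallb_forall in Hf.
    exists i; split; [lia|]. intros j Hj. apply Nat.eqb_eq, Hf, in_seq; lia.
  - intros [i [Hi Hf]]. exists i; split; [apply in_seq; lia|].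
    apply forallb_forall. intros j Hj. apply in_seq in Hj. apply Nat.eqb_eq, Hf; lia.
Qed.

Lemma hzr_shift k c a l : (c < k)%nat -> a <> 0%nat ->
  has_zero_run k (repeat 0%nat c ++ a :: l) = has_zero_run k l.
Proof.
  intros Hc Ha. apply Bool.eq_iff_eq_true; rewrite !hzr_char. split.
  - intros [i [Hi H]]. destruct (le_lt_dec i c).
    + specialize (H (c - i)%nat ltac:(lia)). replace (i + (c-i))%nat with c in H by lia.
      rewrite app_nth2 in H; rewrite repeat_length in *; [|lia].
      rewrite Nat.sub_diag in H; simpl in H; contradiction.
    + exists (i - S c)%nat. split.
      * rewrite length_app, repeat_length in Hi; simpl in Hi; lia.
      * intros j Hj; specialize (H j Hj). rewrite app_nth2 in H; rewrite repeat_length in *; [|lia].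
        replace (i + j - c)%nat with (S (i - S c + j)) in H by lia. exact H.
  - intros [i [Hi H]]. exists (S c + i)%nat. split.
    + rewrite length_app, repeat_length; simpl; lia.
    + intros j Hj. rewrite app_nth2; rewrite repeat_length; [|lia].
      replace (S c + i + j - c)%nat with (S (i+j)) by lia. simpl. apply H; auto.
Qed.

Lemma hzr_big k c l : (1 <= k)%nat -> (k <= c)%nat -> has_zero_run k (repeat 0%nat c ++ l) = true.
Proof.
  intros Hk Hc. apply hzr_char. exists 0%nat. split; [lia|].
  intros j Hj. simpl. rewrite app_nth1 by (rewrite repeat_length; lia). apply nth_repeat_lt; lia.
Qed.

Lemma noRun_big k c l : (k <= c)%nat -> noRun k c l = false.
Proof. intros H. destruct l; simpl; rewrite (proj2 (Nat.ltb_ge _ _) H); reflexivity. Qed.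

Lemma repeat_snoc (x : nat) j l : repeat x j ++ x :: l = repeat x (S j) ++ l.
Proof. induction j; simpl; auto. rewrite IHj. reflexivity. Qed.

Lemma hzr_noRun k c l : (1 <= k)%nat -> has_zero_run k (repeat 0%nat c ++ l) = negb (noRun k c l).
Proof.
  intros Hk. revert c; induction l as [|a l IH]; intros c.
  - destruct (le_lt_dec k c). { rewrite hzr_big, noRun_big; auto. }
    simpl. rewrite (proj2 (Nat.ltb_lt _ _) l). simpl.
    apply not_true_iff_false. rewrite hzr_char. intros [i [Hi H]].
    rewrite app_nil_r, repeat_length in Hi. specialize (H (c - i)%nat ltac:(lia)).
    rewrite app_nil_r, nth_overflow in H; [discriminate|]. rewrite repeat_length; lia.
  - destruct (le_lt_dec k c). { rewrite hzr_big, noRun_big; auto. }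
    simpl. rewrite (proj2 (Nat.ltb_lt _ _) l0). simpl.
    destruct (Nat.eqb_spec a 0).
    + subst. rewrite repeat_snoc. apply IH.
    + rewrite hzr_shift by auto. apply (IH 0%nat).
Qed.

Fixpoint F (k q m c : nat) : nat :=
  match m with
  | O => if Nat.ltb c k then 1%nat else 0%nat
  | S m' => if Nat.ltb c k then (F k q m' (S c) + (q-1) * F k q m' 0)%nat else 0%nat
  end.

Lemma cntG k q m c : (1 <= q)%nat ->
  cnt q (S m) (fun r => noRun k c (firstn m r) && negb (Nat.eqb (nth m r 0%nat) 0)) = ((q-1) * F k q m c)%nat.
Proof.
  intros Hq. revert c; induction m as [|m IH]; intros c; rewrite cnt_S.
  - rewrite (sum_seq_split q 0 (if Nat.ltb c k then 1%nat else 0%nat) _ Hq).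
    + simpl. destruct (c <? k)%nat; lia.
    + rewrite cnt_0. simpl. destruct (c <? k)%nat; reflexivity.
    + intros a Ha. rewrite cnt_0. simpl. destruct a; [lia|]. simpl. destruct (c <? k)%nat; reflexivity.
  - simpl F. destruct (Nat.ltb c k) eqn:E.
    + rewrite (sum_seq_split q ((q-1) * F k q m (S c)) ((q-1) * F k q m 0) _ Hq).
      * nia.
      * rewrite <- IH. apply cnt_ext; intro w. simpl. rewrite E. reflexivity.
      * intros a Ha. rewrite <- IH. apply cnt_ext; intro w. simpl. rewrite E.
        destruct a; [lia|]. reflexivity.
    + rewrite (sum_seq_split q 0 0 _ Hq); [lia| |].
      * rewrite <- (cnt_false q (S m)). apply cnt_ext; intro w. simpl. rewrite E. reflexivity.
      * intros a _. rewrite <- (cnt_false q (S m)). apply cnt_ext; intro w. simpl. rewrite E. reflexivity.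
Qed.

Lemma inC1_bad n k j a w : (j < k)%nat -> a <> 0%nat -> inC1 n k (repeat 0%nat j ++ a :: w) = false.
Proof.
  intros Hj Ha. unfold inC1.
  assert (Hf : forallb (fun i => Nat.eqb (nth i (repeat 0%nat j ++ a :: w) 0%nat) 0) (seq 0 k) = false).
  { apply not_true_iff_false. intro H. rewrite forallb_forall in H.
    specialize (H j ltac:(apply in_seq; lia)).
    rewrite app_nth2, repeat_length, Nat.sub_diag in H by (rewrite repeat_length; lia).
    simpl in H. apply Nat.eqb_eq in H. contradiction. }
  rewrite Hf. reflexivity.
Qed.

Lemma inC1_zero n k w : inC1 n k (repeat 0%nat k ++ 0%nat :: w) = false.
Proof.
  unfold inC1.
  rewrite app_nth2, repeat_length, Nat.sub_diag by (rewrite repeat_length; lia). simpl.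
  rewrite !andb_false_r. reflexivity.
Qed.

Lemma inC1_good n k m x r : (1 <= k)%nat -> x <> 0%nat -> length r = S m -> n = (k + 2 + m)%nat ->
  inC1 n k (repeat 0%nat k ++ x :: r) = noRun k 0 (firstn m r) && negb (Nat.eqb (nth m r 0%nat) 0).
Proof.
  intros Hk Hx Hr Hn. subst n. unfold inC1.
  assert (Hf : forallb (fun i => Nat.eqb (nth i (repeat 0%nat k ++ x :: r) 0%nat) 0) (seq 0 k) = true).
  { apply forallb_forall. intros i Hi. apply in_seq in Hi.
    rewrite app_nth1 by (rewrite repeat_length; lia). rewrite nth_repeat_lt by lia. reflexivity. }
  rewrite Hf.
  rewrite app_nth2, repeat_length, Nat.sub_diag by (rewrite repeat_length; lia).
  rewrite app_nth2, repeat_length by (rewrite repeat_length; lia).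
  replace (k + 2 + m - 1 - k)%nat with (S m) by lia. simpl nth.
  rewrite skipn_app, repeat_length.
  rewrite skipn_all2 by (rewrite repeat_length; lia).
  replace (k + 1 - k)%nat with 1%nat by lia. replace (k + 2 + m - k - 2)%nat with m by lia.
  simpl. pose proof (hzr_noRun k 0 (firstn m r) Hk) as HH; simpl in HH; rewrite HH.
  destruct (Nat.eqb_spec x 0); [contradiction|]. simpl.
  rewrite negb_involutive, andb_comm. reflexivity.
Qed.

Lemma card_C1_formula q k m : (1 <= q)%nat -> (1 <= k)%nat ->
  card_C1 (k+2+m) q k = ((q-1)*((q-1) * F k q m 0))%nat.
Proof.
  intros Hq Hk. set (n := (k+2+m)%nat).
  assert (Hj : forall j, (j <= k)%nat -> card_C1 n q k = cnt q (n - j) (fun w => inC1 n k (repeat 0%nat j ++ w))).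
  { induction j; intros Hjk.
    - rewrite Nat.sub_0_r. reflexivity.
    - rewrite IHj by lia. replace (n - j)%nat with (S (n - S j)) by (unfold n; lia).
      rewrite cnt_S. rewrite (sum_seq_split q (cnt q (n - S j) (fun w => inC1 n k (repeat 0%nat (S j) ++ w))) 0 _ Hq).
      + lia.
      + apply cnt_ext; intro w. rewrite repeat_snoc. reflexivity.
      + intros a Ha. transitivity (cnt q (n - S j) (fun _ => false)); [|apply cnt_false]. apply cnt_ext; intro w. apply inC1_bad; lia. }
  rewrite (Hj k (le_n k)). replace (n - k)%nat with (S (S m)) by (unfold n; lia).
  rewrite cnt_S. rewrite (sum_seq_split q 0 ((q-1) * F k q m 0) _ Hq).
  - lia.
  - transitivity (cnt q (S m) (fun _ => false)); [|apply cnt_false]. apply cnt_ext; intro w. apply inC1_zero.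
  - intros a Ha. rewrite <- (cntG k q m 0 Hq). apply cnt_ext_in; intros w Hw.
    apply inC1_good; auto; lia.
Qed.

Lemma F_big k q m c : (k <= c)%nat -> F k q m c = 0%nat.
Proof. intros H. destruct m; simpl; rewrite (proj2 (Nat.ltb_ge _ _) H); reflexivity. Qed.

Lemma F_small k q m c : (1 <= q)%nat -> (m + c < k)%nat -> F k q m c = (q ^ m)%nat.
Proof.
  intros Hq; revert c; induction m; intros c H; simpl.
  - rewrite (proj2 (Nat.ltb_lt _ _)) by lia. reflexivity.
  - rewrite (proj2 (Nat.ltb_lt _ _)) by lia. rewrite IHm by lia. rewrite IHm by lia.
    destruct q; [lia|]. simpl. rewrite Nat.sub_0_r. nia.
Qed.

Lemma F_edge k q m c : (1 <= q)%nat -> (m + c = k)%nat -> F k q m c = (q ^ m - 1)%nat.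
Proof.
  intros Hq; revert c; induction m; intros c H; simpl.
  - rewrite (proj2 (Nat.ltb_ge _ _)) by lia. reflexivity.
  - rewrite (proj2 (Nat.ltb_lt _ _)) by lia. rewrite IHm by lia. rewrite F_small by lia.
    assert (1 <= q ^ m)%nat by (apply Nat.neq_0_lt_0, Nat.pow_nonzero; lia).
    destruct q; [lia|]. simpl. rewrite Nat.sub_0_r. nia.
Qed.

Fixpoint T (k q m d : nat) : nat :=
  match d with O => 0%nat | S d' => (F k q m 0 + T k q (pred m) d')%nat end.

Lemma T_last k q m d : T k q m (S d) = (T k q m d + F k q (m - d) 0)%nat.
Proof.
  revert m; induction d; intros m; simpl.
  - rewrite Nat.sub_0_r. lia.
  - simpl in IHd. rewrite IHd. replace (pred m - d)%nat with (m - S d)%nat by lia. lia.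
Qed.

Lemma F_unroll k q d m : (1 <= d)%nat -> (d <= k)%nat -> (d <= m)%nat ->
  F k q m (k - d) = ((q-1) * T k q (m-1) d)%nat.
Proof.
  revert m; induction d; intros m H1 H2 H3; [lia|].
  destruct m as [|m]; [lia|]. simpl F. rewrite (proj2 (Nat.ltb_lt _ _)) by lia.
  replace (S (k - S d)) with (k - d)%nat by lia.
  replace (S m - 1)%nat with m by lia.
  destruct d as [|d'].
  - rewrite F_big by lia. simpl. lia.
  - rewrite IHd by lia. simpl T. replace (m - 1)%nat with (pred m) by lia. nia.
Qed.

Lemma A_rec k q m : (1 <= q)%nat -> (1 <= k)%nat -> (k <= m)%nat ->
  (F k q (S m) 0 + (q-1) * F k q (m - k) 0 = q * F k q m 0)%nat.
Proof.
  intros Hq Hk Hm.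
  pose proof (F_unroll k q k (S m) Hk (le_n k) ltac:(lia)) as E1.
  pose proof (F_unroll k q k m Hk (le_n k) Hm) as E2.
  rewrite Nat.sub_diag in E1, E2. rewrite E1, E2.
  replace (S m - 1)%nat with m by lia.
  destruct k as [|k']; [lia|].
  assert (H1 : T (S k') q m (S k') = (F (S k') q m 0 + T (S k') q (m-1) k')%nat).
  { simpl. replace (pred m) with (m-1)%nat by lia. reflexivity. }
  pose proof (T_last (S k') q (m-1) k') as H2.
  replace (m - 1 - k')%nat with (m - S k')%nat in H2 by lia.
  rewrite H1, E2, H2.
  generalize (T (S k') q (m - 1) k') (F (S k') q (m - S k') 0). intros x y.
  destruct q as [|q']; [lia|]. simpl. rewrite Nat.sub_0_r. nia.
Qed.

Lemma exp_pow_n x n : exp x ^ n = exp (x * INR n).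
Proof.
  induction n; simpl. { rewrite Rmult_0_r, exp_0. reflexivity. }
  rewrite IHn, <- exp_plus. f_equal. destruct n; simpl; lra.
Qed.

Lemma exp_le x y : x <= y -> exp x <= exp y.
Proof. intros [H|H]. left; apply exp_increasing; auto. subst; lra. Qed.

Lemma bern x n : 0 <= x <= 1 -> 1 - INR n * x <= (1 - x) ^ n.
Proof.
  intros Hx. induction n. simpl; lra.
  replace ((1-x)^S n) with ((1-x)*(1-x)^n) by reflexivity. rewrite S_INR. assert (0 <= INR n) by apply pos_INR.
  nra.
Qed.

Lemma one_minus_exp th : 0 <= th < 1 -> exp (- (th / (1 - th))) <= 1 - th.
Proof.
  intros H. rewrite exp_Ropp.
  pose proof (exp_ineq1_le (th / (1 - th))) as E.
  assert (Hp : 0 < exp (th / (1 - th))) by apply exp_pos.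
  replace (1 + th / (1 - th)) with (/ (1 - th)) in E by (field; lra).
  apply Rmult_le_reg_l with (exp (th / (1 - th))); auto.
  rewrite Rinv_r by lra.
  apply Rmult_le_reg_l with (/ (1 - th)). apply Rinv_0_lt_compat; lra.
  rewrite <- Rmult_assoc, (Rmult_comm _ (exp _)), Rmult_assoc, Rinv_l, Rmult_1_r, Rmult_1_r by lra. lra.
Qed.

Section Core.
Variables (k : nat) (P : nat -> R) (eps : R).
Hypotheses (Hk : (1 <= k)%nat) (He : 0 < eps) (Hs : (2 * INR k + 1) * eps <= 1/4)
  (H0 : forall j, (j < k)%nat -> P j = 1) (Hkk : 1 - 2 * eps <= P k <= 1)
  (Hrec : forall j, (k <= j)%nat -> P (S j) = P j - eps * P (j - k)).

Let lam := 1 - 2 * eps.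

Lemma lamk : 1 - 2 * INR k * eps <= lam ^ k.
Proof.
  unfold lam. pose proof (bern (2*eps) k). assert (0 <= INR k) by apply pos_INR.
  assert (1 <= INR k) by (apply (le_INR 1); auto). nra.
Qed.

Lemma step_all : forall j, 0 < P j /\ lam * P j <= P (S j) /\ P (S j) <= P j.
Proof.
  assert (Hl : 0 < lam) by (unfold lam; assert (1 <= INR k) by (apply (le_INR 1); auto); nra).
  assert (Hlk : 1/2 <= lam ^ k) by (pose proof lamk; assert (0 <= INR k) by apply pos_INR; nra).
  intro j. induction j as [j IH] using (well_founded_induction lt_wf).
  assert (Hpos : 0 < P j).
  { destruct j as [|j']. rewrite H0 by lia; lra.
    destruct (IH j' ltac:(lia)) as [A [B _]]. nra. }
  split; [exact Hpos|].
  destruct (le_lt_dec k j) as [Hj|Hj].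
  - assert (Hit : forall i t, (i + t <= j)%nat -> lam ^ t * P i <= P (i + t) <= P i).
    { intros i t. induction t; intros Hit.
      - rewrite Nat.add_0_r; simpl; lra.
      - destruct IHt as [A B]; [lia|]. destruct (IH (i+t)%nat ltac:(lia)) as [C [D E]].
        rewrite Nat.add_succ_r. simpl. split; nra. }
    destruct (Hit (j - k)%nat k ltac:(lia)) as [A B]. replace (j - k + k)%nat with j in A, B by lia.
    assert (0 < P (j - k)) by (destruct (IH (j-k)%nat ltac:(lia)); lra).
    rewrite Hrec by auto.
    assert (X1 : eps * P (j - k) <= 2 * eps * (lam ^ k * P (j - k))).
    { assert (0 <= eps * P (j-k)) by nra. nra. }
    assert (X2 : 2 * eps * (lam ^ k * P (j - k)) <= 2 * eps * P j) by (apply Rmult_le_compat_l; lra).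
    unfold lam in *. split; nra.
  - destruct (Nat.eq_dec (S j) k) as [E|E].
    + rewrite E, H0 by lia. unfold lam in *. lra.
    + rewrite !H0 by lia. unfold lam in *. lra.
Qed.

Lemma iter_all : forall i t, lam ^ t * P i <= P (i + t) <= P i.
Proof.
  assert (Hl : 0 < lam) by (unfold lam; assert (1 <= INR k) by (apply (le_INR 1); auto); nra).
  intros i t. induction t.
  - rewrite Nat.add_0_r; simpl; lra.
  - destruct IHt as [A B]. destruct (step_all (i+t)) as [C [D E]].
    rewrite Nat.add_succ_r. simpl. split; nra.
Qed.

Lemma upper : forall t, P (k + t) <= (1 - eps) ^ t.
Proof.
  induction t. { rewrite Nat.add_0_r; simpl; lra. }
  rewrite Nat.add_succ_r, Hrec by lia. replace (k + t - k)%nat with t by lia.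
  destruct (iter_all t k) as [_ B]. rewrite Nat.add_comm in B.
  simpl. assert (1 - eps >= 0) by (assert (1 <= INR k) by (apply (le_INR 1); auto); nra). nra.
Qed.

Lemma lower : forall t, (1 - eps / (1 - 2 * INR k * eps)) ^ t * (1 - 2 * eps) <= P (k + t).
Proof.
  assert (Hl : 1 - 2 * INR k * eps > 0) by (assert (0 <= INR k) by apply pos_INR; nra).
  induction t. { rewrite Nat.add_0_r; simpl; lra. }
  rewrite Nat.add_succ_r, Hrec by lia. replace (k + t - k)%nat with t by lia.
  destruct (iter_all t k) as [A _]. rewrite Nat.add_comm in A.
  pose proof lamk as L.
  assert (Pt : 0 < P t) by apply step_all.
  assert (Hth : eps / (1 - 2 * INR k * eps) * P (k + t) >= eps * P t).
  { unfold Rdiv. rewrite Rmult_assoc. apply Rle_ge.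
    apply Rmult_le_compat_l; [lra|].
    apply Rmult_le_reg_l with (1 - 2 * INR k * eps); [lra|].
    rewrite <- Rmult_assoc, Rinv_r, Rmult_1_l by lra. nra. }
  assert (Hth1 : eps / (1 - 2 * INR k * eps) <= 1).
  { apply Rmult_le_reg_l with (1 - 2 * INR k * eps); [lra|].
    unfold Rdiv. rewrite Rmult_comm, Rmult_assoc, Rinv_l by lra.
    assert (0 <= INR k) by apply pos_INR. nra. }
  simpl. nra.
Qed.

Theorem core : forall t,
  P (k + t) <= exp (- (eps * INR t)) /\
  (1 - 2 * eps) * exp (- (eps * (1 + 2 * ((2 * INR k + 1) * eps)) * INR t)) <= P (k + t).
Proof.
  intros t. assert (Hk1 : 1 <= INR k) by (apply (le_INR 1); auto).
  split.
  - eapply Rle_trans; [apply upper|].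
    replace (- (eps * INR t)) with ((- eps) * INR t) by ring. rewrite <- exp_pow_n.
    apply pow_incr. split; [nra|]. pose proof (exp_ineq1_le (- eps)). lra.
  - eapply Rle_trans; [|apply lower].
    set (th := eps / (1 - 2 * INR k * eps)).
    assert (Hl : 1 - 2 * INR k * eps > 0) by nra.
    assert (Hth0 : 0 <= th) by (unfold th; apply Rlt_le, Rdiv_lt_0_compat; lra).
    assert (Hth1 : th < 1).
    { unfold th. apply Rmult_lt_reg_l with (1 - 2 * INR k * eps); [lra|].
      unfold Rdiv. rewrite Rmult_comm, Rmult_assoc, Rinv_l by lra. nra. }
    rewrite Rmult_comm. apply Rmult_le_compat_r; [nra|].
    eapply Rle_trans; [|apply pow_incr; split; [|apply (one_minus_exp th)]; auto; left; apply exp_pos].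
    rewrite exp_pow_n. apply exp_le.
    assert (0 <= INR t) by apply pos_INR.
    assert (Hq : th / (1 - th) = eps / (1 - (2 * INR k + 1) * eps)).
    { unfold th. field. split; nra. }
    rewrite Hq.
    set (s := (2 * INR k + 1) * eps) in *.
    assert (eps / (1 - s) <= eps * (1 + 2 * s)).
    { apply Rmult_le_reg_l with (1 - s); [lra|].
      unfold Rdiv. rewrite <- Rmult_assoc, (Rmult_comm (1 - s) eps), Rmult_assoc, Rinv_r by lra.
      assert (0 <= s) by (unfold s; nra).
      assert (0 <= s * (1 - 2 * s)) by nra.
      assert (0 <= eps * (s * (1 - 2 * s))) by nra. nra. }
    nra.
Qed.
End Core.

Lemma ceil_bounds x : x <= IZR (Rceil x) < x + 1.
Proof.
  unfold Rceil. rewrite minus_IZR. destruct (archimed (- x)) as [A B]. lra.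
Qed.

Section PerN.
Variables (q : nat) (z : Z) (n : nat).
Hypothesis hq : (2 <= q)%nat.
Let Q := INR q.
Let lQ := ln Q.
Let Ln := logq Q (INR n).
Let B := (Q - 1) / Q * exp (- IZR z * lQ).
Let v := (2 * Ln + 4 + 2 * Rabs (IZR z)) / INR n.
Let w := B * v.
Hypotheses (hn1 : 1 <= INR n) (hL : 1 + Rabs (IZR z) <= Ln) (hv : v <= 1) (hw : w <= 1/4).

Lemma Q2 : 2 <= Q.
Proof. unfold Q. apply (le_INR 2); auto. Qed.

Lemma lQpos : 0 < lQ.
Proof. unfold lQ. rewrite <- ln_1. apply ln_increasing; pose proof Q2; lra. Qed.

Lemma Bpos : 0 < B.
Proof. unfold B. pose proof Q2. apply Rmult_lt_0_compat; [apply Rdiv_lt_0_compat; lra|apply exp_pos]. Qed.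

Theorem per_n :
  (1 - 2 * w) * exp (- (2 * B * w)) <= INR (card_C1 n q (kn q n z)) / main_term q n z <= exp (2 * w).
Proof.
  pose proof Q2 as HQ. pose proof lQpos as HlQ. pose proof Bpos as HB.
  set (c := Rceil Ln).
  assert (Hc := ceil_bounds Ln). fold c in Hc.
  set (cz := (c + z)%Z).
  assert (Hz1 := Rle_abs (IZR z)). assert (Hz2 := Rle_abs (- IZR z)). rewrite Rabs_Ropp in Hz2.
  assert (Hcz : 1 <= IZR cz) by (unfold cz; rewrite plus_IZR; lra).
  assert (Hcz0 : (0 <= cz)%Z) by (apply le_IZR; lra).
  set (K := kn q n z).
  assert (HK : INR K = IZR cz).
  { unfold K, kn. fold Q. fold Ln. fold c. fold cz. rewrite INR_IZR_INZ, Z2Nat.id; auto. }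
  assert (HK1 : (1 <= K)%nat) by (apply INR_le; simpl; lra).
  assert (HKup : INR K < Ln + 1 + Rabs (IZR z)) by (rewrite HK; unfold cz; rewrite plus_IZR; lra).
  assert (Hnpos : 0 < INR n) by lra.
  assert (Hvn : 2 * Ln + 4 + 2 * Rabs (IZR z) <= INR n).
  { unfold v in hv. apply Rmult_le_reg_r with (/ INR n). apply Rinv_0_lt_compat; lra.
    rewrite Rinv_r by lra. exact hv. }
  assert (HnK : (2 * K + 2 < n)%nat).
  { apply INR_lt. rewrite plus_INR, mult_INR. simpl. pose proof (Rabs_pos (IZR z)). lra. }
  set (m := (n - K - 2)%nat). set (t := (n - 2 * K - 2)%nat).
  assert (Hn : n = (K + 2 + m)%nat) by (unfold m; lia).
  assert (Hm : m = (K + t)%nat) by (unfold m, t; lia).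
  assert (Ht : INR t = INR n - 2 * INR K - 2).
  { unfold t. rewrite !minus_INR by lia. rewrite mult_INR. simpl. ring. }
  set (eps := (Q - 1) / (Q * Q ^ K)).
  assert (HQK : 0 < Q ^ K) by (apply pow_lt; lra).
  assert (Heps : 0 < eps) by (unfold eps; apply Rdiv_lt_0_compat; nra).
  assert (EK : exp (IZR cz * lQ) = Q ^ K).
  { rewrite <- HK. unfold lQ. rewrite <- (Rpower_pow K Q) by lra. unfold Rpower. reflexivity. }
  assert (En : exp (Ln * lQ) = INR n).
  { unfold Ln, logq. fold Q. fold lQ. replace (ln (INR n) / lQ * lQ) with (ln (INR n)) by (field; lra).
    apply exp_ln; lra. }
  assert (EX : exp ((Ln - IZR cz) * lQ) = INR n / Q ^ K).
  { replace ((Ln - IZR cz) * lQ) with (Ln * lQ + - (IZR cz * lQ)) by ring.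
    rewrite exp_plus, exp_Ropp, En, EK. reflexivity. }
  assert (HepsB : eps * INR n <= B).
  { assert (eps * INR n = (Q - 1) / Q * exp ((Ln - IZR cz) * lQ)) by (rewrite EX; unfold eps; field; lra).
    rewrite H. unfold B. apply Rmult_le_compat_l; [apply Rlt_le, Rdiv_lt_0_compat; lra|].
    apply exp_le. unfold cz. rewrite plus_IZR. nra. }
  set (s := (2 * INR K + 1) * eps).
  assert (Hsw : s <= w).
  { unfold s, w, v.
    assert (0 <= 2 * Ln + 4 + 2 * Rabs (IZR z)) by lra.
    apply Rle_trans with ((2 * Ln + 4 + 2 * Rabs (IZR z)) * eps).
    - apply Rmult_le_compat_r; lra.
    - replace (B * ((2 * Ln + 4 + 2 * Rabs (IZR z)) / INR n)) with
        ((2 * Ln + 4 + 2 * Rabs (IZR z)) * (B / INR n)) by (field; lra).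
      apply Rmult_le_compat_l; auto.
      apply Rmult_le_reg_r with (INR n); [lra|]. unfold Rdiv. rewrite Rmult_assoc, Rinv_l; lra. }
  assert (Hs0 : 0 <= s) by (unfold s; pose proof (pos_INR K); nra).
  set (P := fun j => INR (F K q j 0) / Q ^ j).
  assert (H0 : forall j, (j < K)%nat -> P j = 1).
  { intros j Hj. unfold P. rewrite F_small by lia. rewrite pow_INR. fold Q.
    field. apply pow_nonzero; lra. }
  assert (Hkk : 1 - 2 * eps <= P K <= 1).
  { unfold P. rewrite F_edge by lia. rewrite minus_INR.
    2:{ apply Nat.neq_0_lt_0, Nat.pow_nonzero; lia. }
    rewrite pow_INR. fold Q. simpl INR.
    replace ((Q ^ K - 1) / Q ^ K) with (1 - / Q ^ K) by (field; lra).
    split.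
    - unfold eps. apply Rplus_le_compat_l, Ropp_le_contravar.
      replace (2 * ((Q - 1) / (Q * Q ^ K))) with ((2 * (Q - 1) / Q) * / Q ^ K) by (field; lra).
      rewrite <- (Rmult_1_l (/ Q ^ K)) at 1. apply Rmult_le_compat_r.
      + left; apply Rinv_0_lt_compat; auto.
      + apply Rmult_le_reg_r with Q; [lra|]. unfold Rdiv. rewrite Rmult_assoc, Rinv_l; lra.
    - assert (0 < / Q ^ K) by (apply Rinv_0_lt_compat; auto). lra. }
  assert (Hrec : forall j, (K <= j)%nat -> P (S j) = P j - eps * P (j - K)%nat).
  { intros j Hj. pose proof (A_rec K q j ltac:(lia) HK1 Hj) as R.
    apply (f_equal INR) in R. rewrite plus_INR, !mult_INR, minus_INR in R by lia.
    fold Q in R. change (INR 1) with 1 in R.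
    unfold P.
    assert (Ej : Q ^ j = Q ^ K * Q ^ (j - K)) by (rewrite <- pow_add; f_equal; lia).
    assert (0 < Q ^ (j - K)) by (apply pow_lt; lra).
    replace (INR (F K q (S j) 0)) with (Q * INR (F K q j 0) - (Q - 1) * INR (F K q (j - K) 0)) by lra.
    simpl pow. rewrite Ej. unfold eps. field. split; lra. }
  assert (Hs4 : (2 * INR K + 1) * eps <= 1/4) by (fold s; lra).
  destruct (core K P eps HK1 Heps Hs4 H0 Hkk Hrec t) as [Up Lo].
  fold s in Lo. rewrite <- Hm in Up, Lo.
  assert (Hcard : INR (card_C1 n q K) = (Q - 1) * ((Q - 1) * INR (F K q m 0))).
  { rewrite Hn at 1. rewrite card_C1_formula by lia. rewrite !mult_INR, minus_INR by lia. reflexivity. }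
  assert (Hmain : main_term q n z = (Q - 1) ^ 2 * Q ^ m * exp (- (eps * INR n))).
  { unfold main_term, Defs.Delta. fold Q. fold Ln. fold c.
    replace (logq Q (exp 1)) with (/ lQ) by (unfold logq; rewrite ln_exp; fold lQ; field; lra).
    unfold Rpower. fold lQ.
    assert (EX1 : exp ((Ln - IZR c - IZR z - 1) * lQ) = INR n / Q ^ K / Q).
    { replace ((Ln - IZR c - IZR z - 1) * lQ) with ((Ln - IZR cz) * lQ + - lQ)
        by (unfold cz; rewrite plus_IZR; ring).
      rewrite exp_plus, EX, exp_Ropp. unfold lQ. rewrite exp_ln by lra. reflexivity. }
    rewrite EX1.
    replace ((Ln - IZR c - IZR z - / lQ * (Q - 1) * (INR n / Q ^ K / Q)) * lQ)
      with ((Ln - IZR cz) * lQ + - (eps * INR n)) by (unfold cz, eps; rewrite plus_IZR; field; lra).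
    rewrite exp_plus, EX.
    rewrite Hn at 1. rewrite !pow_add.
    field. repeat split; lra. }
  assert (Hratio : INR (card_C1 n q K) / main_term q n z = P m * exp (eps * INR n)).
  { rewrite Hcard, Hmain. unfold P. rewrite exp_Ropp.
    assert (0 < Q ^ m) by (apply pow_lt; lra). assert (0 < exp (eps * INR n)) by apply exp_pos.
    field. repeat split; lra. }
  rewrite Hratio.
  assert (Hen : 0 < exp (eps * INR n)) by apply exp_pos.
  assert (Htn : INR t <= INR n) by (pose proof (pos_INR K); lra).
  split.
  - eapply Rle_trans; [|apply Rmult_le_compat_r; [lra|exact Lo]].
    rewrite (Rmult_assoc (1 - 2 * eps)), <- exp_plus.
    apply Rmult_le_compat.
    + assert (eps <= s) by (unfold s; pose proof (pos_INR K); nra). lra.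
    + left; apply exp_pos.
    + assert (eps <= s) by (unfold s; pose proof (pos_INR K); nra). lra.
    + apply exp_le.
      assert (eps * (1 + 2 * s) * INR t <= eps * (1 + 2 * s) * INR n) by (apply Rmult_le_compat_l; nra).
      assert (s * (eps * INR n) <= w * B) by (apply Rmult_le_compat; nra).
      nra.
  - eapply Rle_trans; [apply Rmult_le_compat_r; [lra|exact Up]|].
    rewrite <- exp_plus. apply exp_le.
    rewrite Ht. unfold s in Hsw. pose proof (pos_INR K). nra.
Qed.
End PerN.

Lemma EV_L (q : nat) (M : R) : (2 <= q)%nat ->
  exists N, forall n, (N <= n)%nat -> 1 <= INR n /\ M <= logq (INR q) (INR n).
Proof.
  intros hq. assert (HQ : 2 <= INR q) by (apply (le_INR 2); auto).
  assert (HlQ : 0 < ln (INR q)) by (rewrite <- ln_1; apply ln_increasing; lra).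
  destruct (INR_unbounded (Rmax 1 (exp (M * ln (INR q))))) as [N HN].
  exists N. intros n Hn. apply le_INR in Hn.
  pose proof (Rmax_l 1 (exp (M * ln (INR q)))). pose proof (Rmax_r 1 (exp (M * ln (INR q)))).
  split; [lra|].
  unfold logq. apply Rmult_le_reg_r with (ln (INR q)); auto.
  unfold Rdiv. rewrite Rmult_assoc, Rinv_l, Rmult_1_r by lra.
  rewrite <- (ln_exp (M * ln (INR q))) at 1. left. apply ln_increasing; [apply exp_pos|lra].
Qed.

Lemma EV_v (q : nat) (z : Z) (sg : R) : (2 <= q)%nat -> 0 < sg ->
  exists N, forall n, (N <= n)%nat ->
    (2 * logq (INR q) (INR n) + 4 + 2 * Rabs (IZR z)) / INR n <= sg.
Proof.
  intros hq Hsg. assert (HQ : 2 <= INR q) by (apply (le_INR 2); auto).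
  set (lQ := ln (INR q)).
  assert (HlQ : 0 < lQ) by (unfold lQ; rewrite <- ln_1; apply ln_increasing; lra).
  set (M0 := 4 / (sg * lQ)).
  assert (HM0 : 0 < M0) by (unfold M0; apply Rdiv_lt_0_compat; nra).
  set (D := 2 * ln M0 / lQ + (4 + 2 * Rabs (IZR z))).
  destruct (INR_unbounded (Rmax 1 (2 * Rabs D / sg))) as [N HN].
  exists N. intros n Hn. apply le_INR in Hn.
  pose proof (Rmax_l 1 (2 * Rabs D / sg)). pose proof (Rmax_r 1 (2 * Rabs D / sg)).
  assert (Hn0 : 0 < INR n) by lra.
  assert (Hln : ln (INR n) <= ln M0 + INR n / M0).
  { pose proof (exp_ineq1_le (ln (INR n) - ln M0)) as E.
    rewrite Rminus_def, exp_plus, exp_Ropp, !exp_ln in E by lra. unfold Rdiv. lra. }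
  assert (HD : 2 * Rabs D < sg * INR n).
  { assert (X : 2 * Rabs D = (2 * Rabs D / sg) * sg) by (field; lra).
    rewrite X. apply Rmult_lt_compat_r with (r := sg) in HN; auto.
    assert (2 * Rabs D / sg * sg <= Rmax 1 (2 * Rabs D / sg) * sg) by (apply Rmult_le_compat_r; lra).
    nra. }
  assert (H2 : 2 * logq (INR q) (INR n) <= 2 * ln M0 / lQ + sg * INR n / 2).
  { unfold logq. fold lQ.
    apply Rmult_le_reg_r with lQ; auto.
    replace (2 * (ln (INR n) / lQ) * lQ) with (2 * ln (INR n)) by (field; lra).
    replace ((2 * ln M0 / lQ + sg * INR n / 2) * lQ) with (2 * ln M0 + 2 * (INR n / M0)).
    - lra.
    - unfold M0. field. split; lra. }
  pose proof (Rle_abs D).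
  apply Rmult_le_reg_r with (INR n); auto. unfold Rdiv. rewrite Rmult_assoc, Rinv_l, Rmult_1_r by lra.
  unfold D in *. lra.
Qed.

Theorem lemma6 (q : nat) (z : Z) (hq : (2 <= q)%nat) :
  Un_cv (fun n => INR (card_C1 n q (kn q n z)) / main_term q n z) 1.
Proof.
  intros e He.
  assert (HQ : 2 <= INR q) by (apply (le_INR 2); auto).
  set (B := (INR q - 1) / INR q * exp (- IZR z * ln (INR q))).
  assert (HB : 0 < B) by (unfold B; apply Rmult_lt_0_compat; [apply Rdiv_lt_0_compat; lra|apply exp_pos]).
  set (sg := Rmin (1/4) (e / (4 * (1 + B)))).
  assert (Hsg : 0 < sg) by (unfold sg; apply Rmin_glb_lt; [lra|apply Rdiv_lt_0_compat; lra]).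
  assert (Hsg1 : sg <= 1/4) by apply Rmin_l.
  assert (Hsg2 : sg <= e / (4 * (1 + B))) by apply Rmin_r.
  set (sv := Rmin 1 (sg / B)).
  assert (Hsv : 0 < sv) by (unfold sv; apply Rmin_glb_lt; [lra|apply Rdiv_lt_0_compat; lra]).
  destruct (EV_L q (1 + Rabs (IZR z)) hq) as [N1 HN1].
  destruct (EV_v q z sv hq Hsv) as [N2 HN2].
  exists (Nat.max N1 N2). intros n Hn.
  destruct (HN1 n ltac:(lia)) as [hn1 hL].
  pose proof (HN2 n ltac:(lia)) as Hv.
  set (v := (2 * logq (INR q) (INR n) + 4 + 2 * Rabs (IZR z)) / INR n) in *.
  assert (Hv1 : v <= 1) by (pose proof (Rmin_l 1 (sg / B)) as X; fold sv in X; lra).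
  assert (Hv0 : 0 <= v).
  { unfold v. apply Rlt_le, Rdiv_lt_0_compat; [pose proof (Rabs_pos (IZR z)); lra|lra]. }
  assert (Hw : B * v <= sg).
  { pose proof (Rmin_r 1 (sg / B)) as X. fold sv in X.
    apply Rle_trans with (B * (sg / B)); [apply Rmult_le_compat_l; lra|].
    right; field; lra. }
  destruct (per_n q z n hq hn1 hL Hv1 ltac:(fold B v; lra)) as [Lo Up].
  fold B v in Lo, Up.
  set (w := B * v) in *.
  set (r := INR (card_C1 n q (kn q n z)) / main_term q n z) in *.
  assert (Hw0 : 0 <= w) by (unfold w; nra).
  assert (U : r < 1 + e).
  { assert (E1 : 1 - 2 * w <= exp (- (2 * w))) by (pose proof (exp_ineq1_le (- (2 * w))); lra).
    assert (E2 : exp (2 * w) * exp (- (2 * w)) = 1) by (rewrite <- exp_plus; replace (2 * w + - (2 * w)) with 0 by ring; apply exp_0).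
    assert (E3 : exp (2 * w) <= 1 + 4 * w).
    { assert (0 < exp (2 * w)) by apply exp_pos. nra. }
    assert (4 * w < e).
    { apply Rle_lt_trans with (4 * (e / (4 * (1 + B)))); [lra|].
      replace (4 * (e / (4 * (1 + B)))) with (e / (1 + B)) by (field; lra).
      apply Rmult_lt_reg_r with (1 + B); [lra|]. unfold Rdiv. rewrite Rmult_assoc, Rinv_l by lra. nra. }
    lra. }
  assert (L : 1 - e < r).
  { assert (E1 : 1 - 2 * B * w <= exp (- (2 * B * w))) by (pose proof (exp_ineq1_le (- (2 * B * w))); lra).
    assert (E2 : (1 - 2 * w) * (1 - 2 * B * w) <= (1 - 2 * w) * exp (- (2 * B * w))) by (apply Rmult_le_compat_l; lra).
    assert (E3 : 2 * w + 2 * B * w < e).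
    { assert (2 * w * (1 + B) <= e / 2).
      { apply Rle_trans with (2 * (e / (4 * (1 + B))) * (1 + B)).
        - apply Rmult_le_compat_r; lra.
        - right; field; lra. }
      lra. }
    assert (0 <= 4 * B * w * w) by (assert (0 <= w * w) by nra; nra).
    nra. }
  unfold R_dist. apply Rabs_def1; lra.
Qed.
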